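(* Let $\mathbb{K}$ be an $\aleph_0$-complete field and $x=(x_1,\ldots,x_n)$. Let $F$ be a finite system of polynomial equations, with coefficients in $\mathbb{K}[\![x]\!]$, in unknowns $z_1,\ldots,z_q$ and some of their partial derivatives $\partial^{|j_1|}z_{i_1}/\partial x^{j_1},\ldots,\partial^{|j_s|}z_{i_s}/\partial x^{j_s}$, where $i_1,\ldots,i_s\in\{1,\ldots,q\}$ and $j_1,\ldots,j_s\in\mathbb{N}^n$. Then there exists a map $\tau:\mathbb{N}^{q+s}\to\mathbb{N}$ such that: if $c=(c_1,\ldots,c_q,c_{i_1,j_1},\ldots,c_{i_s,j_s})\in\mathbb{N}^{q+s}$ and $z'=(z'_1,\ldots,z'_q)\in\mathbb{K}[\![x]\!]^q$ satisfies $$F\left(z',\frac{\partial^{|j_1|}z'_{i_1}}{\partial x^{j_1}},\ldots,\frac{\partial^{|j_s|}z'_{i_s}}{\partial x^{j_s}}\right)\equiv 0 \text{ modulo } (x)^{\tau(c)},$$ $\mathrm{ord}(z'_i)=c_i$ for $i=1,\ldots,q$ and $\mathrm{ord}\left(\partial^{|j_k|}z'_{i_k}/\partial x^{j_k}\right)=c_{i_k,j_k}$ for $k=1,\ldots,s$, then there exists $z=(z_1,\ldots,z_q)\in\mathbb{K}[\![x]\!]^q$ which, together with its corresponding partial derivatives, is a solution of $F=0$ and satisfies $\mathrm{ord}(z_i)=c_i$ for all $i=1,\ldots,q$ and $\mathrm{ord}\left(\partial^{|j_k|}z_{i_k}/\partial x^{j_k}\right)=c_{i_k,j_k}$ for 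$k=1,\ldots,s$.
   Context: A field $\mathbb{K}$ is called $\aleph_0$-complete if every countable system $\mathcal S$ of polynomial equations with coefficients in $\mathbb{K}$ (in a countable number of indeterminates) has a solution in $\mathbb{K}$ if and only if every finite sub-system of $\mathcal S$ has a solution in $\mathbb{K}$. $(x)$ is the maximal ideal of $\mathbb{K}[\![x]\!]$; for $j=(j^1,\ldots,j^n)\in\mathbb{N}^n$, $|j|=j^1+\cdots+j^n$ and $\partial^{|j|}/\partial x^j$ denotes the formal partial derivative $\partial^{|j|}/\partial x_1^{j^1}\cdots\partial x_n^{j^n}$. For a power series $g$, $\mathrm{ord}(g)$ is the smallest total degree of a monomial appearing in $g$ with nonzero coefficient. *)

(* Defs.v *)
From mathcomp Require Import all_boot all_order all_algebra.
Set Implicit Arguments. Unset Strict Implicit. Unset Printing Implicit Defensive.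
Import GRing.Theory.
Local Open Scope ring_scope.

Definition mon (n : nat) := {ffun 'I_n -> nat}.

Definition mdeg n (m : mon n) : nat := (\sum_(i < n) m i)%N.

(* a formal power series is its coefficient function *)
Definition series (K : fieldType) (n : nat) := mon n -> K.

Section Series.
Variables (K : fieldType) (n : nat).

Definition szero : series K n := fun _ => 0.
Definition sone : series K n := fun m => if m == [ffun=> 0%N] then 1 else 0.
Definition sadd (f g : series K n) : series K n := fun m => f m + g m.

(* Cauchy product: (fg)_m = sum_{a <= m} f_a g_{m-a}; the exponent a is
   enumerated as a finite function with values bounded by |m|. *)
Definition smul (f g : series K n) : series K n := fun m =>
  \sum_(a : {ffun 'I_n -> 'I_(mdeg m).+1} | [forall i, (a i <= m i)%N])
     f [ffun i => nat_of_ord (a i)] * g [ffun i => (m i - a i)%N].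

Definition sexp (f : series K n) (e : nat) : series K n := iter e (smul f) sone.

(* formal partial derivative d^{|j|} f / dx^j :
   coefficient of x^m is  prod_i (m_i + j_i)(m_i + j_i - 1)...(m_i + 1) * f_{m+j} *)
Definition sderiv (j : mon n) (f : series K n) : series K n := fun m =>
  (\prod_(i < n) ((m i + j i) ^_ (j i))%N%:R) * f [ffun i => (m i + j i)%N].

Definition has_ord (g : series K n) (c : nat) : Prop :=
  (exists m : mon n, mdeg m = c /\ g m != 0) /\
  (forall m : mon n, (mdeg m < c)%N -> g m = 0).

Definition cong0_mod (g : series K n) (t : nat) : Prop :=
  forall m : mon n, (mdeg m < t)%N -> g m = 0.

Definition series_eq0 (g : series K n) : Prop := forall m : mon n, g m = 0.

(* polynomial in N indeterminates with coefficients in K[[x]]: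
   a finite list of terms (coefficient, exponent vector) *)
Definition spoly (N : nat) := seq (series K n * {ffun 'I_N -> nat}).

Definition spoly_eval N (P : spoly N) (y : 'I_N -> series K n) : series K n :=
  foldr (fun (t : series K n * {ffun 'I_N -> nat}) acc => sadd (smul t.1 (\big[smul/sone]_(v < N) sexp (y v) (t.2 v))) acc)
        szero P.

End Series.

Definition pde_vars (K : fieldType) (n q s : nat) (ii : 'I_s -> 'I_q)
  (jj : 'I_s -> mon n) (z : 'I_q -> series K n) (v : 'I_(q + s)) : series K n :=
  match split v with
  | inl i => z i
  | inr k => sderiv (jj k) (z (ii k))
  end.

(* polynomial with coefficients in K in the countably many indeterminates
   y_0, y_1, ...: a finite list of terms (c, e) meaning c * prod_v y_v^(e`_v) *)
Definition cpoly (K : fieldType) := seq (K * seq nat).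

Definition cpoly_eval (K : fieldType) (P : cpoly K) (a : nat -> K) : K :=
  \sum_(t <- P) t.1 * \prod_(v < size t.2) a v ^+ nth 0%N t.2 v.

Definition aleph0_complete (K : fieldType) : Prop :=
  forall S : nat -> cpoly K,
    (exists a : nat -> K, forall k, cpoly_eval (S k) a = 0) <->
    (forall I : seq nat, exists a : nat -> K,
        forall k, k \in I -> cpoly_eval (S k) a = 0).

(* Main.v *)
Require Import Defs.
From mathcomp Require Import all_boot all_order all_algebra.
From Stdlib Require Import Classical ClassicalEpsilon FunctionalExtensionality.
Set Implicit Arguments. Unset Strict Implicit. Unset Printing Implicit Defensive.
Import GRing.Theory.
Local Open Scope ring_scope.

Section Rep.
Variable K : fieldType.

Definition rep (f : (nat -> K) -> K) := exists P : cpoly K, forall a, cpoly_eval P a = f a.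

Lemma rep_ext f g : rep f -> (forall a, f a = g a) -> rep g.
Proof. by move=> [P HP] fg; exists P => a; rewrite HP fg. Qed.

Lemma rep_const x : rep (fun _ => x).
Proof. exists [:: (x, [::])] => a; by rewrite /cpoly_eval big_seq1 /= big_ord0 mulr1. Qed.

Lemma rep_var v : rep (fun a => a v).
Proof.
exists [:: (1, rcons (nseq v 0%N) 1%N)] => a.
rewrite /cpoly_eval big_seq1 /= mul1r size_rcons size_nseq big_ord_recr /=.
rewrite nth_rcons size_nseq ltnn eqxx expr1 big1 ?mul1r // => i _.
by rewrite nth_rcons size_nseq ltn_ord nth_nseq ltn_ord expr0.
Qed.

Lemma rep_add f g : rep f -> rep g -> rep (fun a => f a + g a).
Proof. move=> [P HP] [Q HQ]; exists (P ++ Q) => a; by rewrite -HP -HQ /cpoly_eval big_cat. Qed.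

Definition mono (e : seq nat) (a : nat -> K) := \prod_(v < size e) a v ^+ nth 0%N e v.

Lemma monoW e N a : (size e <= N)%N -> mono e a = \prod_(v < N) a v ^+ nth 0%N e v.
Proof.
move=> hN; rewrite /mono (big_ord_widen N (fun v => a v ^+ nth 0%N e v) hN) big_mkcond.
apply: eq_bigr => i _; case: ifP => // /negbT; rewrite -leqNgt => h.
by rewrite nth_default // expr0.
Qed.

Definition addseq (e1 e2 : seq nat) :=
  mkseq (fun v => nth 0%N e1 v + nth 0%N e2 v)%N (maxn (size e1) (size e2)).

Lemma mono_add e1 e2 a : mono (addseq e1 e2) a = mono e1 a * mono e2 a.
Proof.
rewrite (@monoW e1 (maxn (size e1) (size e2)) a (leq_maxl _ _)).
rewrite (@monoW e2 (maxn (size e1) (size e2)) a (leq_maxr _ _)).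
rewrite /mono size_mkseq -big_split /=; apply: eq_bigr => i _.
by rewrite nth_mkseq // exprD.
Qed.

Lemma rep_mul f g : rep f -> rep g -> rep (fun a => f a * g a).
Proof.
move=> [P HP] [Q HQ].
exists [seq (t.1 * u.1, addseq t.2 u.2) | t <- P, u <- Q] => a.
rewrite -HP -HQ /cpoly_eval (big_allpairs_dep (h := fun t u => (t.1 * u.1, addseq t.2 u.2))).
rewrite mulr_suml; apply: eq_bigr => t _.
rewrite mulr_sumr; apply: eq_bigr => u _ /=.
change (t.1 * u.1 * mono (addseq t.2 u.2) a = t.1 * mono t.2 a * (u.1 * mono u.2 a)).
by rewrite mono_add mulrACA.
Qed.

Lemma rep_sum (I : Type) (s : seq I) (P : pred I) (f : I -> (nat -> K) -> K) :
  (forall i, rep (f i)) -> rep (fun a => \sum_(i <- s | P i) f i a).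
Proof.
move=> H; elim: s => [|x s IH].
  by apply: rep_ext (rep_const 0) _ => a; rewrite big_nil.
case Px: (P x).
  by apply: rep_ext (rep_add (H x) IH) _ => a; rewrite big_cons Px.
by apply: rep_ext IH _ => a; rewrite big_cons Px.
Qed.

Variable n : nat.
Definition srep (S : (nat -> K) -> series K n) := forall m, rep (fun a => S a m).

Lemma srep_const g : srep (fun _ => g).
Proof. by move=> m; apply: rep_const. Qed.

Lemma srep_add S T : srep S -> srep T -> srep (fun a => sadd (S a) (T a)).
Proof. move=> HS HT m; exact: rep_add (HS m) (HT m). Qed.

Lemma srep_mul S T : srep S -> srep T -> srep (fun a => smul (S a) (T a)).
Proof.
move=> HS HT m; rewrite /smul.
apply: rep_ext.
  apply: (@rep_sum _ (index_enum {ffun 'I_n -> 'I_(mdeg m).+1})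
    (fun b => [forall i, (b i <= m i)%N])
    (fun b a => S a [ffun i => nat_of_ord (b i)] * T a [ffun i => (m i - b i)%N])).
  move=> b; apply: rep_mul; [exact: HS | exact: HT].
by [].
Qed.

Lemma srep_exp S e : srep S -> srep (fun a => sexp (S a) e).
Proof.
move=> HS; elim: e => [|e IH]; first exact: srep_const.
exact: (srep_mul HS IH).
Qed.

Lemma srep_bigsmul (I : Type) (s : seq I) (G : (nat -> K) -> I -> series K n) :
  (forall i, srep (fun a => G a i)) -> srep (fun a => \big[@smul K n/@sone K n]_(i <- s) G a i).
Proof.
move=> H; elim: s => [|x s IH].
  by move=> m; apply: rep_ext (srep_const (@sone K n) m) _ => a; rewrite big_nil.
move=> m; apply: rep_ext (srep_mul (H x) IH m) _ => a; by rewrite big_cons.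
Qed.

Lemma srep_deriv j S : srep S -> srep (fun a => sderiv j (S a)).
Proof. move=> HS m; rewrite /sderiv; apply: rep_mul; [exact: rep_const | exact: HS]. Qed.

Lemma srep_spoly N (P : spoly K n N) (Y : (nat -> K) -> 'I_N -> series K n) :
  (forall v, srep (fun a => Y a v)) -> srep (fun a => spoly_eval P (Y a)).
Proof.
move=> HY; elim: P => [|t P IH]; first exact: srep_const.
apply: (srep_add _ IH); apply: srep_mul; first exact: srep_const.
move=> m; apply: rep_ext; first exact: ((@srep_bigsmul _ (index_enum 'I_N) (fun a v => sexp (Y a v) (t.2 v))) (fun v => srep_exp _ (HY v)) m).
by [].
Qed.

End Rep.

Section Main.
Variables (K : fieldType) (n q s : nat) (ii : 'I_s -> 'I_q) (jj : 'I_s -> mon n)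
  (r : nat) (F : 'I_r -> spoly K n (q + s)) (c : {ffun 'I_(q + s) -> nat}).

Definition Vt := (('I_q * mon n) + ('I_(q + s) * mon n))%type.
Definition Et := ((('I_r * mon n) + ('I_(q + s) * mon n)) + 'I_(q + s))%type.

Definition zfun (a : nat -> K) : 'I_q -> series K n :=
  fun i m => a (pickle (inl (i, m) : Vt)).
Definition wfun (a : nat -> K) (v : 'I_(q + s)) (m : mon n) : K :=
  a (pickle (inr (v, m) : Vt)).
Definition tomon N (b : {ffun 'I_n -> 'I_N}) : mon n := [ffun i => nat_of_ord (b i)].

Definition eqfun (k : Et) (a : nat -> K) : K :=
  match k with
  | inl (inl (e, m)) => spoly_eval (F e) (pde_vars ii jj (zfun a)) m
  | inl (inr (v, m)) => if (mdeg m < c v)%N then pde_vars ii jj (zfun a) v m else 0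
  | inr v => \sum_(b : {ffun 'I_n -> 'I_(c v).+1} | mdeg (tomon b) == c v)
               pde_vars ii jj (zfun a) v (tomon b) * wfun a v (tomon b) - 1
  end.

Lemma srep_z i : srep (fun a => zfun a i).
Proof. move=> m; exact: rep_var. Qed.

Lemma srep_pv v : srep (fun a => pde_vars ii jj (zfun a) v).
Proof.
rewrite /pde_vars; case: (split v) => [i|k]; first exact: srep_z.
apply: srep_deriv; exact: srep_z.
Qed.

Lemma rep_eqfun k : rep (eqfun k).
Proof.
case: k => [[[e m]|[v m]]|v]; rewrite /eqfun /=.
- exact: (@srep_spoly K n _ (F e) (fun a => pde_vars ii jj (zfun a)) (fun v => srep_pv v) m).
- case: (mdeg m < c v)%N; [exact: (srep_pv v m) | exact: rep_const].
- apply: rep_add; last exact: rep_const.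
  apply: rep_ext.
    apply: (@rep_sum _ _ (index_enum {ffun 'I_n -> 'I_(c v).+1})
      (fun b => mdeg (tomon b) == c v)
      (fun b a => pde_vars ii jj (zfun a) v (tomon b) * wfun a v (tomon b))).
    move=> b; apply: rep_mul; [exact: (srep_pv v (tomon b)) | exact: rep_var].
  by [].
Qed.

Definition Psel (k : Et) : cpoly K :=
  proj1_sig (constructive_indefinite_description _ (rep_eqfun k)).
Lemma Psel_ok k a : cpoly_eval (Psel k) a = eqfun k a.
Proof. exact: (proj2_sig (constructive_indefinite_description _ (rep_eqfun k)) a). Qed.

Definition Sys (k : nat) : cpoly K := if unpickle k is Some e then Psel e else [::].

Definition ordok (z : 'I_q -> series K n) :=
  forall v, has_ord (pde_vars ii jj z v) (c v).
Definition exact_sol (z : 'I_q -> series K n) :=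
  forall e, series_eq0 (spoly_eval (F e) (pde_vars ii jj z)).

Lemma exact_of_sol a : (forall k, cpoly_eval (Sys k) a = 0) ->
  exact_sol (zfun a) /\ ordok (zfun a).
Proof.
move=> H; have E k : eqfun k a = 0 by rewrite -Psel_ok -(H (pickle k)) /Sys pickleK.
split.
- by move=> e m; apply: (E (inl (inl (e, m)))).
- move=> v; split.
  + have := E (inr v); rewrite /= => /eqP; rewrite subr_eq0 => /eqP Hs.
    case: (boolP [exists b : {ffun 'I_n -> 'I_(c v).+1},
       (mdeg (tomon b) == c v) && (pde_vars ii jj (zfun a) v (tomon b) != 0)]).
    * by case/existsP => b /andP [/eqP hb nz]; exists (tomon b).
    * rewrite negb_exists => /forallP Hb; exfalso.
      have : (0 : K) = 1.
        rewrite -Hs big1 // => b hb; move: (Hb b); rewrite hb /= negbK => /eqP ->.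
        by rewrite mul0r.
      by move/eqP; rewrite eq_sym oner_eq0.
  + move=> m hm; have := E (inl (inr (v, m))); by rewrite /= hm.
Qed.

Definition deg (k : nat) : nat :=
  match (unpickle k : option Et) with Some (inl (inl (_, m))) => mdeg m | _ => 0%N end.

Lemma approx_sol (I : seq nat) z' t :
  (forall e, cong0_mod (spoly_eval (F e) (pde_vars ii jj z')) t) -> ordok z' ->
  (forall k, k \in I -> (deg k < t)%N) ->
  exists a, forall k, k \in I -> cpoly_eval (Sys k) a = 0.
Proof.
move=> Hcong Hord Hdeg.
pose m0 := fun v => proj1_sig (constructive_indefinite_description _ (Hord v).1).
have Hm0 v : mdeg (m0 v) = c v /\ pde_vars ii jj z' v (m0 v) != 0.
  exact: (proj2_sig (constructive_indefinite_description _ (Hord v).1)).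
pose a := fun k => match (unpickle k : option Vt) with
  | Some (inl (i, m)) => z' i m
  | Some (inr (v, m)) => if m == m0 v then (pde_vars ii jj z' v m)^-1 else 0
  | None => 0 end.
have Hz : zfun a = z'.
  apply: functional_extensionality => i; apply: functional_extensionality => m.
  by rewrite /zfun /a pickleK.
have Hw v m : wfun a v m = if m == m0 v then (pde_vars ii jj z' v m)^-1 else 0.
  by rewrite /wfun /a pickleK.
exists a => k kI; rewrite /Sys; case Hk: (unpickle k) => [e|]; last first.
  by rewrite /cpoly_eval big_nil.
rewrite Psel_ok; case: e Hk => [[[e m]|[v m]]|v] Hk /=; rewrite Hz.
- apply: Hcong; have := Hdeg k kI; by rewrite /deg Hk.
- case: ifP => // h; exact: (Hord v).2 m h.
- have [hM nzM] := Hm0 v.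
  pose b0 : {ffun 'I_n -> 'I_(c v).+1} := [ffun i => inord (m0 v i)].
  have tb0 : tomon b0 = m0 v.
    apply/ffunP => i; rewrite !ffunE inordK // ltnS -hM /mdeg (bigD1 i) //=.
    exact: leq_addr.
  rewrite (bigD1 b0) /=; last by rewrite tb0 hM.
  rewrite big1 ?addr0; first by rewrite tb0 Hw eqxx mulfV // subrr.
  move=> b /andP [_ nb]; rewrite Hw; case: eqP => [e|]; last by rewrite mulr0.
  exfalso; move/eqP: nb; apply; apply/ffunP => i; apply: val_inj.
  have := congr1 (fun f : mon n => f i) (etrans e (esym tb0)).
  by rewrite /tomon /= !ffunE.
Qed.

Lemma compact : aleph0_complete K ->
  (forall t, exists z', (forall e, cong0_mod (spoly_eval (F e) (pde_vars ii jj z')) t)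
     /\ ordok z') ->
  exists z, exact_sol z /\ ordok z.
Proof.
move=> A H.
have [a Ha] : exists a, forall k, cpoly_eval (Sys k) a = 0.
  apply/(A Sys) => I.
  have [z' [h1 h2]] := H (\max_(k <- I) deg k).+1.
  apply: (approx_sol h1 h2) => k kI; rewrite ltnS.
  exact: (@leq_bigmax_seq _ I xpredT deg k kI).
exists (zfun a); exact: exact_of_sol.
Qed.

Lemma ordok_of z :
  (forall i, has_ord (z i) (c (lshift s i))) ->
  (forall k, has_ord (sderiv (jj k) (z (ii k))) (c (rshift q k))) -> ordok z.
Proof.
move=> h1 h2 v; rewrite /pde_vars -{2}(splitK v); case: (split v) => [i|k] /=.
  exact: h1.
exact: h2.
Qed.

Lemma ordok_split z : ordok z ->
  (forall i, has_ord (z i) (c (lshift s i))) /\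
  (forall k, has_ord (sderiv (jj k) (z (ii k))) (c (rshift q k))).
Proof.
move=> h; split => [i|k].
  by have := h (unsplit (inl i)); rewrite /pde_vars unsplitK.
by have := h (unsplit (inr k)); rewrite /pde_vars unsplitK.
Qed.

End Main.

Theorem corollary4p3 (K : fieldType) (n q s : nat)
  (ii : 'I_s -> 'I_q) (jj : 'I_s -> mon n)
  (r : nat) (F : 'I_r -> spoly K n (q + s)) :
  aleph0_complete K ->
  exists tau : {ffun 'I_(q + s) -> nat} -> nat,
    forall (c : {ffun 'I_(q + s) -> nat}) (z' : 'I_q -> series K n),
      (forall e : 'I_r, cong0_mod (spoly_eval (F e) (pde_vars ii jj z')) (tau c)) ->
      (forall i : 'I_q, has_ord (z' i) (c (lshift s i))) ->
      (forall k : 'I_s, has_ord (sderiv (jj k) (z' (ii k))) (c (rshift q k))) ->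
      exists z : 'I_q -> series K n,
        (forall e : 'I_r, series_eq0 (spoly_eval (F e) (pde_vars ii jj z))) /\
        (forall i : 'I_q, has_ord (z i) (c (lshift s i))) /\
        (forall k : 'I_s, has_ord (sderiv (jj k) (z (ii k))) (c (rshift q k))).
Proof.
move=> A.
have H : forall c : {ffun 'I_(q + s) -> nat}, exists t : nat,
    forall (z' : 'I_q -> series K n),
      (forall e : 'I_r, cong0_mod (spoly_eval (F e) (pde_vars ii jj z')) t) ->
      (forall i : 'I_q, has_ord (z' i) (c (lshift s i))) ->
      (forall k : 'I_s, has_ord (sderiv (jj k) (z' (ii k))) (c (rshift q k))) ->
      exists z : 'I_q -> series K n,
        (forall e : 'I_r, series_eq0 (spoly_eval (F e) (pde_vars ii jj z))) /\
        (forall i : 'I_q, has_ord (z i) (c (lshift s i))) /\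
        (forall k : 'I_s, has_ord (sderiv (jj k) (z (ii k))) (c (rshift q k))).
  move=> c; apply: NNPP => Hn.
  have Hc : forall t, exists z', (forall e, cong0_mod (spoly_eval (F e) (pde_vars ii jj z')) t)
     /\ ordok ii jj c z'.
    move=> t; apply: NNPP => Hn2; apply: Hn; exists t => z' h1 h2 h3; exfalso.
    by apply: Hn2; exists z'; split => //; apply: ordok_of.
  have [z [ex ok]] := compact A Hc.
  apply: Hn; exists 0%N => z' _ _ _; exists z; split => //; exact: ordok_split.
exists (fun c => proj1_sig (constructive_indefinite_description _ (H c))).
move=> c; exact: (proj2_sig (constructive_indefinite_description _ (H c))).
Qed.
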